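(* Let $n\ge 2$ be an integer and let $i$ be an odd integer with $3\le i\le 2^n-1$. Then $$v_2\big(s(2^n,i+1)\big)\ge v_2\big(s(2^n,i-1)\big)-2n+4.$$
   Context: The (unsigned) Stirling numbers of the first kind $s(n,k)$ are defined by $x(x+1)\cdots(x+n-1)=\sum_{k=0}^n s(n,k)x^k$. $v_2$ denotes the $2$-adic valuation. *)

(* Defs.v *)
From HB Require Import structures.
From mathcomp Require Import all_boot all_order all_algebra.
Set Implicit Arguments. Unset Strict Implicit. Unset Printing Implicit Defensive.
Import GRing.Theory.
Local Open Scope ring_scope.

Definition rising_poly (n : nat) : {poly nat} :=
  \prod_(j < n) ('X + j%:R%:P).

(* Unsigned Stirling number of the first kind: coefficient of x^k. *)
Definition stirling1 (n k : nat) : nat := nth 0%N (polyseq (rising_poly n)) k.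

(* 2-adic valuation of a natural number (v2 0 = 0 by convention of logn;
   the values used below are nonzero). *)
Definition v2 (m : nat) : nat := logn 2 m.

(* Main.v *)
Require Import Defs.
From mathcomp Require Import all_boot all_order all_algebra.
From mathcomp Require Import zify ring.
Import GRing.Theory.
Set Implicit Arguments. Unset Strict Implicit. Unset Printing Implicit Defensive.

Lemma v2_dvd k x : 0 < x -> (2 ^ k %| x) = (k <= v2 x).
Proof. by move=> x0; rewrite /v2 pfactor_dvdn. Qed.

Lemma v2_pow k : v2 (2 ^ k) = k.
Proof. by rewrite /v2 pfactorK. Qed.

Lemma v2_odd x : odd x -> v2 x = 0.
Proof. by move=> ox; rewrite /v2 logn_coprime // coprime2n. Qed.

Lemma v2_even x : 0 < x -> ~~ odd x -> 1 <= v2 x.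
Proof. by move=> x0 ex; rewrite -v2_dvd // expn1 dvdn2. Qed.

Lemma v2_self x : 0 < x -> 2 ^ v2 x %| x.
Proof. by move=> x0; rewrite v2_dvd. Qed.

Lemma v2_leq x : 0 < x -> 2 ^ v2 x <= x.
Proof. by move=> x0; apply: dvdn_leq => //; apply: v2_self. Qed.

Lemma v2_lt x k : 0 < x -> x < 2 ^ k -> v2 x < k.
Proof.
move=> x0 xk; have := leq_ltn_trans (v2_leq x0) xk.
by rewrite ltn_exp2l.
Qed.

Lemma v2_le x k : 0 < x -> x <= 2 ^ k -> v2 x <= k.
Proof.
move=> x0 xk; have := leq_trans (v2_leq x0) xk.
by rewrite leq_exp2l.
Qed.

Lemma v2_ltself x : 0 < x -> v2 x < x.
Proof.
move=> x0; apply: leq_trans (v2_leq x0); exact: ltn_expl.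
Qed.

Lemma v2_mul x y : 0 < x -> 0 < y -> v2 (x * y) = v2 x + v2 y.
Proof. by move=> x0 y0; rewrite /v2 lognM. Qed.

Lemma v2_add_lt x y : 0 < x -> 0 < y -> v2 x < v2 y -> v2 (x + y) = v2 x.
Proof.
move=> x0 y0 lt; have s0 : 0 < x + y by lia.
apply/eqP; rewrite eqn_leq; apply/andP; split; last first.
  by rewrite -v2_dvd // dvdn_add // ?v2_self // v2_dvd // ltnW.
rewrite leqNgt; apply/negP => H.
have : 2 ^ (v2 x).+1 %| x + y by rewrite v2_dvd.
rewrite dvdn_addl; last by rewrite v2_dvd.
by rewrite v2_dvd // ltnn.
Qed.

Lemma v2_add_ne x y : 0 < x -> 0 < y -> v2 x != v2 y -> v2 (x + y) = minn (v2 x) (v2 y).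
Proof.
move=> x0 y0; case: (ltngtP (v2 x) (v2 y)) => // H _.
  by rewrite v2_add_lt //; lia.
by rewrite addnC v2_add_lt //; lia.
Qed.

Lemma v2_sub_pow m e : 0 < e < 2 ^ m -> v2 (2 ^ m - e) = v2 e.
Proof.
move=> /andP[e0 em].
have d0 : 0 < 2 ^ m - e by lia.
have H1 : forall a b, 0 < a -> 0 < b -> a + b = 2 ^ m -> v2 a <= v2 b.
  move=> a b a0 b0 ab.
  have am : a < 2 ^ m by lia.
  have : 2 ^ v2 a %| 2 ^ m by rewrite dvdn_exp2l // ltnW // v2_lt.
  rewrite -ab dvdn_addr ?v2_self // v2_dvd //.
apply/eqP; rewrite eqn_leq (H1 (2 ^ m - e) e) //; last by lia.
by rewrite (H1 e (2 ^ m - e)) //; lia.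
Qed.

Lemma pow_ge_double m : m.*2 <= 2 ^ m.
Proof.
elim: m => // [[|[|m]]] // IH.
rewrite expnS; lia.
Qed.

Fixpoint F (n k : nat) : nat :=
  if n is n'.+1 then
    if k <= 2 ^ n' then F n' k + (2 ^ n' - k)
    else if odd k then n'.*2 - v2 (k.+1 - 2 ^ n')
    else n' - v2 (k - 2 ^ n')
  else 0.

Definition vo n l := if l == 0 then 0 else if odd l then (n.-1).*2 else n.-1 - v2 l.

Lemma FL n k : k <= 2 ^ n -> F n.+1 k = F n k + (2 ^ n - k).
Proof. by move=> /= ->. Qed.

Lemma FU n k : 2 ^ n < k -> F n.+1 k =
  if odd k then n.*2 - v2 (k.+1 - 2 ^ n) else n - v2 (k - 2 ^ n).
Proof. by move=> /= H; rewrite leqNgt H. Qed.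

Lemma pow_even n : 0 < n -> ~~ odd (2 ^ n).
Proof. by case: n => // n _; rewrite expnS oddM. Qed.

Lemma F_top n : F n (2 ^ n) = 0.
Proof.
case: n => // n; rewrite FU ?ltn_exp2l // expnS.
rewrite oddM /= mul2n -addnn addnK v2_pow; lia.
Qed.

Lemma FU_even n a : 0 < a <= 2 ^ n -> ~~ odd a -> F n.+1 (2 ^ n + a) = vo n.+1 a.
Proof.
move=> /andP[a0 an] ea; rewrite FU; last by lia.
case: n an => [|n] an; first by move: ea; have -> : a = 1 by lia.
rewrite oddD (negbTE (pow_even _)) // (negbTE ea) /vo /= addKn.
by rewrite (negbTE ea); case: eqP => //; lia.
Qed.

Lemma FU_odd n a : 0 < a <= 2 ^ n -> ~~ odd a ->
  F n.+1 (2 ^ n + a - 1) = n + vo n.+1 a.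
Proof.
move=> /andP[a0 an] ea.
case: n an => [|n] an; first by move: ea; have -> : a = 1 by lia.
have a2 : 2 <= a by case: a a0 ea {an} => [|[]].
rewrite FU; last by lia.
have -> : (2 ^ n.+1 + a - 1).+1 - 2 ^ n.+1 = a by lia.
have -> : odd (2 ^ n.+1 + a - 1).
  have -> : 2 ^ n.+1 + a - 1 = (2 ^ n.+1 + a.-1) by lia.
  rewrite oddD (negbTE (pow_even _)) //=.
  by move: ea; rewrite -(prednK a0) /= negbK.
rewrite /vo (negbTE ea); case: eqP; first by lia.
have := v2_le a0 an; lia.
Qed.

Lemma F1 n j : 0 < j < 2 ^ n -> n <= F n.+1 j.
Proof.
move=> /andP[j0 jn]; rewrite FL; last by lia.
case: n jn => [|m] jn; first by lia.
have Hm := ltn_expl m (isT : 1 < 2).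
rewrite expnS mul2n -addnn in jn *.
case: (leqP j (2 ^ m)) => jm; first by lia.
set x := j - 2 ^ m.
have x0 : 0 < x < 2 ^ m by lia.
have -> : j = 2 ^ m + x by lia.
case: (boolP (odd x)) => ox.
  have -> : 2 ^ m + x = 2 ^ m + x.+1 - 1 by lia.
  rewrite FU_odd; first by lia.
    by lia.
  by rewrite /= ox.
rewrite FU_even //; last by lia.
rewrite /vo (negbTE ox); case: eqP; first by lia.
move=> _ /=.
have xv : v2 x < m by apply: v2_lt; lia.
have : 2 ^ v2 x %| 2 ^ m - x.
  by rewrite dvdn_sub // ?v2_self ?dvdn_exp2l //; lia.
move=> /dvdn_leq H; have := H ltac:(lia).
have := ltn_expl (v2 x) (isT : 1 < 2); lia.
Qed.

Definition INC n := forall j k, 0 < j -> j < k -> k <= 2 ^ n ->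
  F n k < F n j + (k - j) + vo n.+1 (k - j).
Definition Aprop n := forall j k, 0 < j -> j < k -> k <= 2 ^ n ->
  F n.+1 k < F n.+1 j + vo n.+1 (k - j).

Lemma A_of_INC n : INC n -> Aprop n.
Proof.
move=> H j k j0 jk kn; rewrite !FL; try lia.
have := H j k j0 jk kn; lia.
Qed.

Lemma Fup_le n k : 2 ^ n < k -> F n.+1 k <= n.*2.
Proof. move=> H; rewrite FU //; case: ifP => _; lia. Qed.

Lemma INC_all n : INC n.
Proof.
elim: n => [|n IH]; first by move=> j k; lia.
have A := A_of_INC IH.
move=> j k j0 jk kn; rewrite expnS mul2n -addnn in kn.
set d := k - j.
have d0 : 0 < d by lia.
have vodd : vo n.+2 d = if odd d then n.+1.*2 else n.+1 - v2 d.
  by rewrite /vo; case: eqP => //; lia.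
have vd := v2_ltself d0.
case: (leqP k (2 ^ n)) => kH.
  have vodd1 : vo n.+1 d = if odd d then n.*2 else n - v2 d.
    by rewrite /vo; case: eqP => //; lia.
  have := A j k j0 jk kH; rewrite -/d vodd1 vodd; case: ifP => _ /=; lia.
have Fk := Fup_le kH.
case: (ltngtP j (2 ^ n)) => jH.
- have := F1 (n := n) (j := j) ltac:(lia).
  rewrite vodd; case: ifP => _; lia.
- case: n IH A kn kH jH Fk vodd => [|n] IH A kn kH jH Fk vodd; first by lia.
  have Hev := pow_even (isT : 0 < n.+1).
  rewrite !FU //.
  have vj1 : v2 (j - 2 ^ n.+1) < n.+1 by apply: v2_lt; lia.
  have vj2 : odd j -> j.+1 < 2 ^ n.+1 + 2 ^ n.+1 -> v2 (j.+1 - 2 ^ n.+1) < n.+1.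
    by move=> oj jl; apply: v2_lt; lia.
  rewrite vodd; case: (boolP (odd d)) => od.
    move: Fk; rewrite FU //; case: ifP => _; case: ifP => _; lia.
  have pj : odd j = odd k.
    have -> : k = j + d by lia.
    by rewrite oddD (negbTE od) addbF.
  rewrite pj; case: ifP => ok.
    have kl : k < 2 ^ n.+1 + 2 ^ n.+1.
      have : k != 2 ^ n.+1 + 2 ^ n.+1.
        apply/eqP => E; move: ok; rewrite E addnn -mul2n -expnS.
        by rewrite (negbTE (pow_even _)).
      lia.
    have := vj2 ltac:(by rewrite pj) ltac:(lia); lia.
  lia.
- rewrite jH (FL (k := 2 ^ n)) // F_top subnn addn0 add0n.
  rewrite vodd; case: (boolP (odd d)) => od; first by lia.
  rewrite FU //.
  have ok : ~~ odd k.
    case: n IH A kn kH jH Fk vodd => [|n] IH A kn kH jH Fk vodd; first by lia.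
    have -> : k = 2 ^ n.+1 + d by lia.
    by rewrite oddD (negbTE (pow_even _)) // (negbTE od).
  rewrite (negbTE ok).
  have -> : k - 2 ^ n = d by lia.
  lia.
Qed.

Lemma A_all n : Aprop n.
Proof. apply: A_of_INC; exact: INC_all. Qed.

Lemma vo_eq n x : vo n.+1 x = if x == 0 then 0 else if odd x then n.*2 else n - v2 x.
Proof. by []. Qed.

Lemma F2 n d : 0 < d -> ~~ odd d -> d < 2 ^ n.+1 ->
  n.+2 <= F n.+2 (2 ^ n.+1 - d) + v2 d.
Proof.
move=> d0 ed dn; rewrite FL; last by lia.
have v1 := v2_even d0 ed.
have -> : 2 ^ n.+1 - (2 ^ n.+1 - d) = d by lia.
case: (leqP (2 ^ n) d) => dn2.
  have := ltn_expl n (isT : 1 < 2); lia.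
case: n dn dn2 => [|n] dn dn2; first by lia.
have -> : 2 ^ n.+2 - d = 2 ^ n.+1 + (2 ^ n.+1 - d) by rewrite expnS; lia.
rewrite FU_even; last first.
  have : ~~ odd (2 ^ n.+1) by apply: pow_even.
  by rewrite oddB ?(negbTE ed) ?addbF //; lia.
  by lia.
rewrite vo_eq; case: eqP; first by lia.
rewrite oddB; last by lia.
rewrite (negbTE ed) (negbTE (pow_even _)) //= => _.
rewrite v2_sub_pow; lia.
Qed.

Lemma F_topm1 n : F n.+2 (2 ^ n.+1 - 1) = n.+1.
Proof.
rewrite FL; last by lia.
have -> : 2 ^ n.+1 - (2 ^ n.+1 - 1) = 1 by have := ltn_expl n.+1 (isT : 1 < 2); lia.
case: n => [|n] //.
have -> : 2 ^ n.+2 - 1 = 2 ^ n.+1 + 2 ^ n.+1 - 1 by rewrite expnS; lia.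
rewrite FU_odd; last by apply: pow_even.
  by rewrite vo_eq; case: eqP; [lia| rewrite (negbTE (pow_even _)) // v2_pow; lia].
have := ltn_expl n.+1 (isT : 1 < 2); lia.
Qed.

Lemma F3 n d : odd d -> 3 <= d -> d < 2 ^ n ->
  F n.+2 (2 ^ n.+1 - d) = n.*2 - v2 d.-1 + d.
Proof.
move=> od d3 dn; rewrite FL; last by lia.
have -> : 2 ^ n.+1 - (2 ^ n.+1 - d) = d by rewrite expnS; lia.
have -> : 2 ^ n.+1 - d = 2 ^ n + (2 ^ n - d.-1) - 1 by rewrite expnS; lia.
have ea : ~~ odd (2 ^ n - d.-1).
  have n0 : 0 < n by case: n dn => //; lia.
  rewrite oddB; last by lia.
  rewrite (negbTE (pow_even n0)) /=.
  have d0 : 0 < d by lia.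
  by move: od; rewrite -(prednK d0) /=.
rewrite FU_odd //; last by lia.
rewrite vo_eq; case: eqP; first by lia.
rewrite (negbTE ea) v2_sub_pow; last by lia.
move=> _; have := v2_lt (x := d.-1) (k := n) ltac:(lia) ltac:(lia); lia.
Qed.

Lemma Bineq n a j : 0 < a -> ~~ odd a -> a <= j -> j < 2 ^ n.+1 ->
  vo n.+2 a < F n.+2 j + vo n.+2 (2 ^ n.+1 + a - j).
Proof.
move=> a0 ea aj jn.
have va1 := v2_even a0 ea.
have va2 : v2 a < n.+1 by apply: v2_lt; lia.
have Fj := F1 (n := n.+1) (j := j) ltac:(lia).
set d := 2 ^ n.+1 - j.
have -> : 2 ^ n.+1 + a - j = a + d by lia.
have d0 : 0 < d by lia.
rewrite !vo_eq; case: eqP; first by lia.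
rewrite (negbTE ea) => _.
case: eqP; first by lia.
move=> _; rewrite oddD (negbTE ea) addFb.
case: (boolP (odd d)) => od; first by lia.
have vl : v2 (a + d) <= n.+1 by apply: v2_le; lia.
case: (eqVneq (v2 a) (v2 d)) => ead.
  have dn : d < 2 ^ n.+1 by rewrite /d; lia.
  have := F2 d0 od dn.
  have -> : 2 ^ n.+1 - d = j by rewrite /d; lia.
  lia.
rewrite v2_add_ne //; lia.
Qed.

Lemma Cineq n a j : 0 < a -> ~~ odd a -> a <= 2 ^ n.+1 -> 0 < j -> a.-1 <= j ->
  j <= 2 ^ n.+1 ->
  n.+1 + vo n.+2 a <= F n.+2 j + vo n.+2 (2 ^ n.+1 + a.-1 - j).
Proof.
move=> a0 ea an j0 aj jn.
have va1 := v2_even a0 ea.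
have va2 : v2 a <= n.+1 by apply: v2_le; lia.
have a2 : 2 <= a by case: a a0 ea {an aj va1 va2} => [|[]].
have oa : odd a.-1 by move: ea; rewrite -(prednK a0) /= negbK.
set d := 2 ^ n.+1 - j.
have -> : 2 ^ n.+1 + a.-1 - j = a.-1 + d by lia.
rewrite !vo_eq; case: eqP; first by lia.
rewrite (negbTE ea) => _.
case: (posnP d) => [d0|d0].
  have -> : j = 2 ^ n.+1 by lia.
  rewrite FL // F_top subnn addn0 d0 addn0.
  rewrite oa; case: eqP; lia.
case: eqP; first by lia.
move=> _.
case: (boolP (odd (a.-1 + d))) => ol; first by lia.
have od : odd d.
  by move: ol; rewrite oddD oa /= negbK.
have vl : v2 (a.-1 + d) <= n.+1 by apply: v2_le; lia.
have Fj := F1 (n := n.+1) (j := j).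
case: (eqVneq d 1) => d1.
  have -> : j = 2 ^ n.+1 - 1 by lia.
  rewrite F_topm1; have -> : a.-1 + d = a by lia.
  lia.
have d3 : 3 <= d by case: d od d0 d1 {ol vl} => [|[|[]]].
have Fj' := Fj ltac:(lia).
set e := d.-1.
have -> : a.-1 + d = a + e by lia.
have e0 : 0 < e by lia.
have ee : ~~ odd e by move: od; rewrite /e -(prednK d0) /=.
have ve1 := v2_even e0 ee.
have vl2 : v2 (a + e) <= n.+1 by apply: v2_le; lia.
case: (eqVneq (v2 a) (v2 e)) => ead; last by rewrite v2_add_ne //; lia.
case: (ltnP d (2 ^ n)) => dn.
  have := F3 od d3 dn.
  have -> : 2 ^ n.+1 - d = j by lia.
  rewrite -/e.
  move=> ->; have := v2_lt (x := e) (k := n) e0 ltac:(lia); lia.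
have Fjd : d <= F n.+2 j.
  rewrite FL; last by lia.
  lia.
have dne : d != 2 ^ n.
  case: (posnP n) => [n0|n0]; first by rewrite n0.
  by apply/eqP => E; move: od; rewrite E (negbTE (pow_even n0)).
have := pow_ge_double n.
have : 2 ^ n.+1 = 2 * 2 ^ n by rewrite expnS.
lia.
Qed.

Lemma Key n j k : 0 < j -> j <= k -> k <= 2 ^ n.+2 -> j <= 2 ^ n.+1 ->
  k - j <= 2 ^ n.+1 ->
  F n.+2 k <= F n.+2 j + vo n.+2 (k - j) /\
  (~~ odd k -> j != (if k <= 2 ^ n.+1 then k else 2 ^ n.+1) ->
     F n.+2 k < F n.+2 j + vo n.+2 (k - j)).
Proof.
move=> j0 jk kn jn kjn.
have e2 : 2 ^ n.+2 = 2 ^ n.+1 + 2 ^ n.+1 by rewrite expnS; lia.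
have Hev : ~~ odd (2 ^ n.+1) by apply: pow_even.
case: (leqP k (2 ^ n.+1)) => kH.
  case: (eqVneq j k) => [->|jk'].
    by rewrite subnn /vo /= addn0; split=> // _; rewrite eqxx.
  have := A_all (n := n.+1) (j := j) (k := k) j0 ltac:(lia) kH.
  by move=> H; split=> //; apply: ltnW.
case: (boolP (odd k)) => ok.
  set a := k - 2 ^ n.+1 + 1.
  have ea : ~~ odd a.
    rewrite /a addn1 /= oddB; last by lia.
    by rewrite ok (negbTE Hev).
  have kne : k != 2 ^ n.+2 by apply/eqP => E; move: ok; rewrite E (negbTE (pow_even _)).
  have a0 : 0 < a <= 2 ^ n.+1 by lia.
  have := Cineq (n := n) (a := a) (j := j) ltac:(lia) ea ltac:(lia) j0 ltac:(lia) jn.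
  have -> : 2 ^ n.+1 + a.-1 - j = k - j by lia.
  have := FU_odd (n := n.+1) a0 ea.
  have -> : 2 ^ n.+1 + a - 1 = k by lia.
  move=> -> H; split=> //; by rewrite ok.
set a := k - 2 ^ n.+1.
have ea : ~~ odd a by rewrite /a oddB ?(negbTE ok) ?(negbTE Hev) //; lia.
have a0 : 0 < a <= 2 ^ n.+1 by lia.
have := FU_even (n := n.+1) a0 ea.
have -> : 2 ^ n.+1 + a = k by lia.
move=> Fk; rewrite Fk.
case: (eqVneq j (2 ^ n.+1)) => [jE|jne].
  rewrite jE (FL (k := 2 ^ n.+1)) // F_top subnn /= -/a.
  by split=> // _; rewrite eqxx.
have := Bineq (n := n) (a := a) (j := j) ltac:(lia) ea ltac:(lia) ltac:(lia).
have -> : 2 ^ n.+1 + a - j = k - j by lia.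
by move=> H; split=> //; apply: ltnW.
Qed.

Lemma Final n k : ~~ odd k -> 2 <= k -> k + 2 <= 2 ^ n.+2 ->
  F n.+2 k <= F n.+2 (k + 2) + n.*2.
Proof.
elim: n k => [|n IH] k ek k2 kn.
  case: (leqP k 2) => k2'.
    have -> : k = 2 by lia.
    by [].
  lia.
have e2 : 2 ^ n.+2 = 2 ^ n.+1 + 2 ^ n.+1 by rewrite expnS; lia.
have e3 : 2 ^ n.+3 = 2 ^ n.+2 + 2 ^ n.+2 by rewrite expnS; lia.
have Hev : ~~ odd (2 ^ n.+2) by apply: pow_even.
case: (ltngtP k (2 ^ n.+2)) => kH.
- have k2H : k + 2 <= 2 ^ n.+2.
    have : k.+1 != 2 ^ n.+2.
      by apply/eqP => E; move: Hev; rewrite -E /= ek.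
    lia.
  rewrite (FL (k := k)); last by lia.
  rewrite (FL (k := k + 2)) //.
  have := IH k ek k2 k2H; lia.
- rewrite FU // (negbTE ek).
  have := v2_even (x := k - 2 ^ n.+2) ltac:(lia) ltac:(by rewrite oddB ?(negbTE ek) ?(negbTE Hev) //; lia).
  lia.
- by rewrite kH (FL (k := 2 ^ n.+2)) // F_top subnn.
Qed.

Definition lin (c : nat -> nat) (M : nat) : {poly nat} :=
  (\prod_(j < M) ('X + (c j)%:P))%R.
Notation "p `_ i" := (nth 0 (polyseq p) i) : nat_scope.

Lemma linS c M : lin c M.+1 = (lin c M * ('X + (c M)%:P))%R.
Proof. by rewrite /lin big_ord_recr. Qed.

Lemma coef_mulXaddC (p : {poly nat}) (c : nat) k :
  (p * ('X + c%:P))%R`_k = (if k is k'.+1 then p`_k' else 0) + p`_k * c.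
Proof. by rewrite mulrDr coefD coefMX coefMC; case: k. Qed.

Lemma lin_hi c M k : (M < k)%N -> (lin c M)`_k = 0.
Proof.
elim: M k => [|M IH] k Mk.
  by rewrite /lin big_ord0 coef1; case: k Mk.
rewrite linS coef_mulXaddC IH; last by lia.
by case: k Mk => // k Mk; rewrite IH //; lia.
Qed.

Lemma lin_top c M : (lin c M)`_M = 1.
Proof.
elim: M => [|M IH]; first by rewrite /lin big_ord0 coef1.
by rewrite linS coef_mulXaddC IH lin_hi.
Qed.

Lemma lin_0 c M : (lin c M)`_0 = \prod_(j < M) c j.
Proof.
elim: M => [|M IH]; first by rewrite /lin !big_ord0 coef1.
by rewrite linS coef_mulXaddC IH big_ord_recr.
Qed.

Lemma size_lin c M : size (lin c M) = M.+1.
Proof.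
apply/eqP; rewrite eqn_leq; apply/andP; split.
  by apply/leq_sizeP => j Mj; exact: (lin_hi c Mj).
rewrite ltnNge; apply/negP => /leq_sizeP H.
by have := H M (leqnn _); rewrite lin_top.
Qed.

Lemma lin_scale s M k :
  (lin (fun j => s * j) M)`_k = s ^ (M - k) * (lin id M)`_k.
Proof.
elim: M k => [|M IH] k.
  by rewrite /lin !big_ord0 !coef1 sub0n expn0 mul1n.
rewrite !linS !coef_mulXaddC !IH.
case: k => [|k].
  by rewrite !add0n subn0 expnS /=; ring.
case: (ltnP M k) => Mk.
  by rewrite !lin_hi //; lia.
have -> : M.+1 - k.+1 = M - k by [].
rewrite IH.
case: (eqVneq k M) => [->|kM].
  have -> : (lin id M)`_M.+1 = 0 by apply: lin_hi.
  by rewrite muln0 !mul0n !addn0.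
have -> : M - k = (M - k.+1).+1 by lia.
rewrite expnS /=; ring.
Qed.

Lemma coef_XaddC_exp (c : nat) t s :
  (('X + c%:P) ^+ t)%R`_s = 'C(t, s) * c ^ (t - s).
Proof.
elim: t s => [|t IH] s.
  by rewrite expr0 coef1; case: s.
rewrite exprSr coef_mulXaddC !IH.
case: s => [|s].
  by rewrite !bin0 add0n subn0 expnS; ring.
rewrite binS.
rewrite IH.
case: (ltnP t s) => ts.
  have h1 : 'C(t, s) = 0 by rewrite bin_small.
  have h2 : 'C(t, s.+1) = 0 by rewrite bin_small // ltnS ltnW.
  by rewrite h1 h2 !mul0n.
have -> : t.+1 - s.+1 = t - s by [].
case: (eqVneq s t) => [->|st].
  have h : 'C(t, t.+1) = 0 by rewrite bin_small.
  by rewrite h binn !mul0n addn0 add0n.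
have -> : t - s = (t - s.+1).+1 by lia.
rewrite expnS; ring.
Qed.

Lemma lin_shift c M : lin (fun j => c j + 1) M = (lin c M \Po ('X + 1))%R.
Proof.
rewrite /lin rmorph_prod; apply: eq_bigr => j _ /=.
by rewrite comp_polyD comp_polyX comp_polyC polyCD polyC1 addrA addrAC.
Qed.

Lemma coef_shift c M l :
  (lin (fun j => c j + 1) M)`_l = \sum_(i < M.+1) (lin c M)`_i * 'C(i, l).
Proof.
rewrite lin_shift coef_comp_poly size_lin; apply: eq_bigr => i _.
by rewrite -polyC1 coef_XaddC_exp exp1n muln1.
Qed.

Lemma lin_split c M :
  lin c (2 * M) = (lin (fun j => c (2 * j)%N) M * lin (fun j => c (2 * j + 1)%N) M)%R.
Proof.
elim: M => [|M IH]; first by rewrite /lin !big_ord0 mulr1.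
have -> : 2 * M.+1 = (2 * M).+2 by rewrite mulnS.
rewrite !linS IH /= addn1.
by rewrite -!mulrA; congr (_ * _)%R; rewrite mulrCA.
Qed.

Lemma big_shiftM (F : nat -> {poly nat}) M :
  (\prod_(M <= i < 2 * M) F i = \prod_(0 <= i < M) F (i + M)%N)%R.
Proof.
rewrite -{1}(add0n M) big_addn.
by have -> : 2 * M - M = M by lia.
Qed.

Lemma lin_pair c M :
  lin c (2 * M) =
  (\prod_(i < M) (('X + (c (M - i.+1)%N)%:P) * ('X + (c (i + M)%N)%:P)))%R.
Proof.
rewrite /lin -(big_mkord xpredT (fun j => 'X + (c j)%:P)%R).
rewrite (big_cat_nat _ (n := M)) //=; last by lia.
rewrite big_nat_rev /= big_shiftM.
rewrite -big_split /= big_mkord.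
by apply: eq_bigr => i _; rewrite add0n.
Qed.

Lemma pair_quad (u v N : nat) : u + v = N ->
  (('X + u%:P) * ('X + v%:P) = 'X * ('X + N%:P) + (u * v)%N%:P :> {poly nat})%R.
Proof. move=> <-; rewrite polyCD polyCM; ring. Qed.

Lemma lin_quad (d : nat -> nat) M (N : nat) :
  (lin d M \Po ('X * ('X + N%:P)))%R =
  (\prod_(j < M) ('X * ('X + N%:P) + (d j)%:P))%R.
Proof.
rewrite /lin rmorph_prod; apply: eq_bigr => j _ /=.
by rewrite comp_polyD comp_polyX comp_polyC.
Qed.

Lemma coef_quad_exp (N t l : nat) :
  (('X * ('X + N%:P)) ^+ t)%R`_l =
  if l < t then 0 else 'C(t, l - t) * N ^ (t - (l - t)).
Proof.
rewrite exprMn coefXnM; case: ifP => // _.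
by rewrite coef_XaddC_exp.
Qed.

Definition ex e x := (0 < x) && (v2 x == e).

Lemma ex_dvd e x : ex e x -> 2 ^ e %| x.
Proof. by case/andP => x0 /eqP <-; apply: v2_self. Qed.

Lemma ex_ndvd e x : ex e x -> ~~ (2 ^ e.+1 %| x).
Proof. by case/andP => x0 /eqP <-; rewrite v2_dvd // ltnn. Qed.

Lemma ex_mul e1 e2 x y : ex e1 x -> ex e2 y -> ex (e1 + e2) (x * y).
Proof.
case/andP => x0 /eqP <-; case/andP => y0 /eqP <-.
by rewrite /ex muln_gt0 x0 y0 v2_mul // eqxx.
Qed.

Lemma ex_pow k : ex k (2 ^ k).
Proof. by rewrite /ex expn_gt0 v2_pow eqxx. Qed.

Lemma ex_odd x : odd x -> ex 0 x.
Proof.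
move=> ox; rewrite /ex v2_odd // eqxx andbT.
by case: x ox.
Qed.

Lemma dvd_le a b x : a <= b -> 2 ^ b %| x -> 2 ^ a %| x.
Proof. by move=> ab; apply: dvdn_trans; rewrite dvdn_exp2l. Qed.

Lemma ex_add e y z : ex e y -> 2 ^ e.+1 %| z -> ex e (y + z).
Proof.
move=> ey dz; have y0 : 0 < y by case/andP: ey.
have s0 : 0 < y + z by lia.
have d1 : 2 ^ e %| y + z.
  by rewrite dvdn_add //; [exact: ex_dvd | exact: (dvd_le (leqnSn e) dz)].
rewrite /ex s0 /=; apply/eqP/anti_leq.
rewrite -v2_dvd // d1 andbT leqNgt -v2_dvd //.
by rewrite dvdn_addl // ex_ndvd.
Qed.

Lemma ex_v2 e x : ex e x -> v2 x = e.
Proof. by case/andP => _ /eqP. Qed.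

Lemma dvd_mul2 a b x y : 2 ^ a %| x -> 2 ^ b %| y -> 2 ^ (a + b) %| x * y.
Proof. by move=> h1 h2; rewrite expnD dvdn_mul. Qed.


Lemma ex0_odd x : ex 0 x -> odd x.
Proof.
case/andP => x0 /eqP v0; apply/negPn/negP => ox.
by have := v2_even x0 ox; rewrite v0.
Qed.

Lemma B0 m i : i <= 2 ^ m - 1 -> odd 'C(2 ^ m - 1, i).
Proof.
elim: i => [|i IH] im; first by rewrite bin0.
have hi := IH ltac:(lia).
have h := mul_bin_left (2 ^ m - 1) i.
have e : 2 ^ m - 1 - i = 2 ^ m - i.+1 by lia.
rewrite e in h.
apply: ex0_odd.
have c0 : 0 < 'C(2 ^ m - 1, i.+1) by rewrite bin_gt0.
rewrite /ex c0 /=.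
have := congr1 v2 h.
rewrite v2_mul // v2_mul; first last.
- by case: ('C(_, _)) hi.
- lia.
rewrite v2_sub_pow; last by lia.
rewrite (v2_odd hi); lia.
Qed.

Lemma B1 m l : 0 < l <= 2 ^ m -> ex (m - v2 l) 'C(2 ^ m, l).
Proof.
move=> /andP[l0 lm].
have h := mul_bin_diag (2 ^ m) l.-1.
rewrite prednK // -subn1 in h.
have o := B0 (m := m) (i := l.-1) ltac:(lia).
have p1 : 0 < 'C(2 ^ m - 1, l.-1) by case: ('C(_, _)) o.
have c0 : 0 < 'C(2 ^ m, l) by rewrite bin_gt0.
rewrite /ex c0 /=.
have := congr1 v2 h.
rewrite v2_mul ?expn_gt0 // v2_mul // v2_pow (v2_odd o) addn0 => E.
have := v2_le l0 lm.
move=> H; apply/eqP; lia.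
Qed.

Lemma B2 t q : 0 < t -> odd q -> 2 ^ v2 t %| 'C(t, q).
Proof.
move=> t0 oq.
have q0 : 0 < q by case: q oq.
have h := mul_bin_diag t q.-1.
rewrite prednK // in h.
have : 2 ^ v2 t %| q * 'C(t, q) by rewrite -h dvdn_mulr // v2_self.
rewrite Gauss_dvdr //.
by apply: coprimeXl; rewrite coprime2n.
Qed.

Lemma coefM_nat (p q : {poly nat}) k : (p * q)%R`_k = \sum_(j < k.+1) p`_j * q`_(k - j).
Proof. exact: coefM. Qed.
Lemma coef_comp_nat (p q : {poly nat}) l : (p \Po q)%R`_l = \sum_(i < size p) p`_i * (q ^+ i)%R`_l.
Proof. exact: coef_comp_poly. Qed.

Definition aa n k := (rising_poly (2 ^ n))`_k.

Lemma rising_lin n : rising_poly n = lin id n.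
Proof. by rewrite /rising_poly /lin; apply: eq_bigr => j _; rewrite natn. Qed.

Definition Val n := forall k, 0 < k <= 2 ^ n ->
  2 ^ (F n k) %| aa n k /\ (~~ odd k -> ex (F n k) (aa n k)).

Lemma Val1 : Val 1.
Proof.
move=> k /andP[k0 k2].
have Fk : F 1 k = 0 by case: k k0 k2 => [|[|[|]]].
rewrite Fk; split; first by rewrite dvd1n.
move=> ek; have -> : k = 2 by case: k k0 k2 ek Fk => [|[|[]]].
by rewrite /aa rising_lin lin_top.
Qed.

Definition Bp m := lin (fun j => 2 * j) (2 ^ m.+1).
Definition Op m := lin (fun j => 2 * j + 1) (2 ^ m.+1).

Lemma rising_BO m : rising_poly (2 ^ m.+2) = (Bp m * Op m)%R.
Proof.
by rewrite rising_lin expnS lin_split.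
Qed.

Lemma beta_E m k : (Bp m)`_k = 2 ^ (2 ^ m.+1 - k) * aa m.+1 k.
Proof. by rewrite /Bp lin_scale /aa rising_lin. Qed.

Lemma beta0 m : (Bp m)`_0 = 0.
Proof. rewrite /Bp lin_0; case: (2 ^ m.+1) (expn_gt0 2 m.+1) => [|n] // _. by rewrite big_ord_recl /= muln0 mul0n. Qed.

Lemma beta_hi m k : 2 ^ m.+1 < k -> (Bp m)`_k = 0.
Proof. exact: lin_hi. Qed.

Lemma betaH m : (Bp m)`_(2 ^ m.+1) = 1.
Proof. exact: lin_top. Qed.

Lemma beta_lb m k : Val m.+1 -> 0 < k <= 2 ^ m.+1 -> 2 ^ F m.+2 k %| (Bp m)`_k.
Proof.
move=> IH /andP[k0 kH]; rewrite beta_E FL // addnC expnD.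
by apply: dvdn_mul => //; case: (IH k ltac:(lia)).
Qed.

Lemma beta_ex m k : Val m.+1 -> 0 < k <= 2 ^ m.+1 -> ~~ odd k ->
  ex (F m.+2 k) ((Bp m)`_k).
Proof.
move=> IH /andP[k0 kH] ek; rewrite beta_E FL // addnC.
apply: ex_mul; first exact: ex_pow.
by case: (IH k ltac:(lia)) => _ /(_ ek).
Qed.

Lemma o_shift m l : (Op m)`_l = \sum_(i < (2 ^ m.+1).+1) (Bp m)`_i * 'C(i, l).
Proof. exact: (coef_shift (fun j => 2 * j)). Qed.

Lemma V1 m l : Val m.+1 -> ~~ odd l -> l <= 2 ^ m.+1 -> ex (vo m.+2 l) ((Op m)`_l).
Proof.
move=> IH el lH.
rewrite o_shift big_ord_recr /= betaH mul1n addnC.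
apply: ex_add.
  case: (posnP l) => [->|l0]; first by rewrite bin0; apply: ex_odd.
  rewrite vo_eq; case: eqP; first by lia.
  by rewrite (negbTE el) => _; apply: B1; rewrite l0.
apply: dvdn_sum => i _.
case: (posnP i) => [i0|i0]; first by rewrite i0 beta0.
apply: dvdn_mulr.
apply: (dvd_le _ (beta_lb IH _)); last by rewrite i0 /= ltnW.
have := F1 (n := m.+1) (j := i) ltac:(by rewrite i0 /=).
rewrite vo_eq; case: eqP => [_|l0]; first by lia.
rewrite (negbTE el).
have := v2_even (x := l) ltac:(lia) el.
lia.
Qed.

Definition Rp m := lin (fun i => (2 * (2 ^ m - i.+1) + 1) * (2 * (i + 2 ^ m) + 1)) (2 ^ m).

Lemma Op_quad m : Op m = (Rp m \Po ('X * ('X + (2 ^ m.+2)%N%:P)))%R.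
Proof.
rewrite /Op /Rp lin_quad expnS lin_pair; apply: eq_bigr => i _.
rewrite (pair_quad (N := 2 ^ m.+2)) //.
have := ltn_ord i; rewrite !expnS; lia.
Qed.

Lemma o_quad m l : (Op m)`_l = \sum_(t < (2 ^ m).+1) (Rp m)`_t *
  (if l < t then 0 else 'C(t, l - t) * (2 ^ m.+2) ^ (t - (l - t))).
Proof.
rewrite Op_quad coef_comp_nat /Rp size_lin; apply: eq_bigr => t _.
by rewrite coef_quad_exp.
Qed.

Lemma rho_lb m t : Val m.+1 -> 0 < t < 2 ^ m -> 2 ^ (m - v2 t) %| (Rp m)`_t.
Proof.
move=> IH /andP[t0 tQ].
have el : ~~ odd (2 * t) by rewrite oddM.
have V := V1 IH el ltac:(rewrite expnS; lia).
have vt : vo m.+2 (2 * t) = m - v2 t.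
  have v2t : v2 (2 * t) = (v2 t).+1.
    by rewrite v2_mul // -[X in v2 X]expn1 v2_pow.
  rewrite vo_eq ifF; last by apply/eqP; lia.
  rewrite (negbTE el) v2t; lia.
have D := ex_dvd V; rewrite vt o_quad (bigD1 (Ordinal (ltnW (leq_ltn_trans tQ (ltnSn _))))) //= in D.
have e1 : 2 * t - t = t by lia.
rewrite e1 ltnNge leq_pmull //= subnn binn expn0 !muln1 in D.
move: D; set S := (\sum_(_ < _ | _) _); move=> D.
have DS : 2 ^ (m - v2 t) %| S; last by rewrite (dvdn_addl _ DS) in D.
apply: dvdn_sum => s /= ns.
case: ifP => sl; first by rewrite muln0.
apply: dvdn_mull.
case: (ltnP s t) => st.
  by rewrite bin_small ?mul0n //; lia.
have ne : (s : nat) != t by apply: contraNneq ns => E; apply/eqP/val_inj.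
have e2 : 0 < s - (2 * t - s) by lia.
apply: dvdn_mull.
apply: (dvdn_trans (n := 2 ^ m.+2)); first by rewrite dvdn_exp2l //; lia.
exact: dvdn_exp e2 (dvdnn _).
Qed.

Lemma V3 m l : Val m.+1 -> odd l -> 2 ^ (m.+1).*2 %| (Op m)`_l.
Proof.
move=> IH ol.
rewrite o_quad; apply: dvdn_sum => t _.
case: ifP => lt; first by rewrite muln0.
case: (ltnP t (l - t)) => tl.
  by rewrite bin_small ?mul0n ?muln0.
set q := t - (l - t).
have lq : l + q = 2 * t by rewrite /q; lia.
have oq : odd q.
  have : odd (l + q) = false by rewrite lq oddM.
  by rewrite oddD ol; case: (odd q).
have t0 : 0 < t.
  rewrite lt0n; apply/negP => /eqP t0; move: tl ol; rewrite t0 subn0 leqn0.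
  by move=> /eqP ->.
have q0 : 0 < q by rewrite lt0n; apply/negP => /eqP q0; move: oq; rewrite q0.
have -> : 'C(t, l - t) = 'C(t, q) by rewrite /q bin_sub //; lia.
have h1 : 2 ^ (m + 2) %| (2 ^ m.+2) ^ q.
  by rewrite addn2; apply: dvdn_exp q0 (dvdnn _).
have h2 : 2 ^ m %| (Rp m)`_t * 'C(t, q).
  have tQ : t <= 2 ^ m by have := ltn_ord t; lia.
  case: (eqVneq (t : nat) (2 ^ m)) => tE.
    rewrite tE /Rp lin_top mul1n -{1}(v2_pow m) -tE.
    exact: B2 t0 oq.
  have vt : v2 t <= m by apply: v2_le.
  apply: (dvd_le (_ : m <= (m - v2 t) + v2 t)); first by lia.
  apply: dvd_mul2.
    by apply: rho_lb => //; rewrite t0 /=; lia.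
  exact: B2 t0 oq.
rewrite mulnA.
have -> : (m.+1).*2 = m + (m + 2) by lia.
exact: dvd_mul2 h2 h1.
Qed.

Lemma O_lb m l : Val m.+1 -> 2 ^ vo m.+2 l %| (Op m)`_l.
Proof.
move=> IH.
case: (ltnP (2 ^ m.+1) l) => lH; first by rewrite /Op lin_hi.
case: (boolP (odd l)) => ol; last exact: ex_dvd (V1 IH ol lH).
rewrite vo_eq ifF; last by apply/eqP => l0; move: ol; rewrite l0.
rewrite ol; exact: V3 IH ol.
Qed.

Lemma step m : Val m.+1 -> Val m.+2.
Proof.
move=> IH k /andP[k0 kN].
have e2 : 2 ^ m.+2 = 2 ^ m.+1 + 2 ^ m.+1 by rewrite expnS; lia.
have Hev : ~~ odd (2 ^ m.+1) by apply: pow_even.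
have AE : aa m.+2 k = \sum_(j < k.+1) (Bp m)`_j * (Op m)`_(k - j).
  by rewrite /aa rising_BO coefM_nat.
have TB : forall j : 'I_k.+1, 0 < j -> j <= 2 ^ m.+1 -> k - j <= 2 ^ m.+1 ->
    2 ^ (F m.+2 j + vo m.+2 (k - j)) %| (Bp m)`_j * (Op m)`_(k - j).
  move=> j j0 jH kjH; apply: dvd_mul2; first by apply: beta_lb; rewrite ?j0.
  exact: O_lb.
have Z : forall j : 'I_k.+1, ~~ [&& 0 < j, j <= 2 ^ m.+1 & k - j <= 2 ^ m.+1] ->
    (Bp m)`_j * (Op m)`_(k - j) = 0.
  move=> j; case: (posnP j) => [->|j0] /=; first by rewrite beta0.
  case: (leqP j (2 ^ m.+1)) => jH /=; last by rewrite beta_hi.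
  rewrite -ltnNge => kjH; by rewrite /Op lin_hi // muln0.
split.
  rewrite AE; apply: dvdn_sum => j _.
  case: (boolP [&& 0 < j, j <= 2 ^ m.+1 & k - j <= 2 ^ m.+1]) => c; last by rewrite Z.
  case/and3P: c => j0 jH kjH.
  have [K1 _] := Key (n := m) (j := j) (k := k) j0 (ltn_ord j) kN jH kjH.
  exact: (dvd_le K1 (TB j j0 jH kjH)).
move=> ek.
set j0 := if k <= 2 ^ m.+1 then k else 2 ^ m.+1.
have j0k : j0 < k.+1.
  by rewrite /j0; case: (leqP k (2 ^ m.+1)) => h; lia.
have Bj0 : ex (F m.+2 k) ((Bp m)`_j0 * (Op m)`_(k - j0)).
  rewrite /j0; case: ifP => kH.
    rewrite subnn -[F m.+2 k]addn0; apply: ex_mul; first by apply: beta_ex; rewrite ?k0.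
    have := V1 IH (l := 0) isT (leq0n _).
    by rewrite /vo.
  rewrite betaH mul1n.
  have a0 : 0 < k - 2 ^ m.+1 <= 2 ^ m.+1 by lia.
  have ea : ~~ odd (k - 2 ^ m.+1) by rewrite oddB ?(negbTE ek) ?(negbTE Hev) //; lia.
  have := FU_even a0 ea; have -> : 2 ^ m.+1 + (k - 2 ^ m.+1) = k by lia.
  move=> ->; apply: V1 => //; lia.
rewrite AE (bigD1 (Ordinal j0k)) //.
apply: ex_add; first exact: Bj0.
apply: dvdn_sum => j nj.
case: (boolP [&& 0 < j, j <= 2 ^ m.+1 & k - j <= 2 ^ m.+1]) => c; last by rewrite Z.
case/and3P: c => jp jH kjH.
have [_ K2] := Key (n := m) (j := j) (k := k) jp (ltn_ord j) kN jH kjH.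
have nj' : (j : nat) != j0 by apply: contraNneq nj => E; apply/eqP/val_inj.
exact: (dvd_le (K2 ek nj') (TB j jp jH kjH)).
Qed.

Lemma Val_all n : Val n.+1.
Proof.
elim: n => [|n IH]; first exact: Val1.
case: n IH => [|n] IH; last exact: step.
exact: step.
Qed.

Import Num.Theory.
Unset Implicit Arguments.

Lemma final_nat n i : (2 <= n)%N -> odd i -> (3 <= i)%N -> (i <= 2 ^ n - 1)%N ->
  (v2 (stirling1 (2 ^ n) (i - 1)) + 4 <= v2 (stirling1 (2 ^ n) (i + 1)) + 2 * n)%N.
Proof.
case: n => [|[|n]] // _ oi i3 iN.
have V := Val_all (n := n.+1).
have ek1 : ~~ odd (i - 1).
  by rewrite oddB ?oi //; lia.
have ek2 : ~~ odd (i + 1) by rewrite oddD oi.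
have [_ E1] := V (i - 1) ltac:(have := expn_gt0 2 n.+2; lia).
have [_ E2] := V (i + 1) ltac:(have := expn_gt0 2 n.+2; lia).
rewrite /stirling1 -/(aa n.+2 (i - 1)) -/(aa n.+2 (i + 1)).
rewrite (ex_v2 (E1 ek1)) (ex_v2 (E2 ek2)).
have := Final (n := n) (k := i - 1) ek1 ltac:(lia) ltac:(lia).
have -> : i - 1 + 2 = i + 1 by lia.
lia.
Qed.

Local Open Scope ring_scope.

Theorem mainTheorem10 (n i : nat) :
  (2 <= n)%N -> odd i -> (3 <= i)%N -> (i <= 2 ^ n - 1)%N ->
  (v2 (stirling1 (2 ^ n) (i - 1)))%:Z - (2 * n)%:Z + 4
    <= (v2 (stirling1 (2 ^ n) (i + 1)))%:Z.
Proof.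
move=> h1 h2 h3 h4; have := final_nat n i h1 h2 h3 h4.
lia.
Qed.
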